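(* Consider a switching non-stationary Markov reward process as described in the context. Let $\mathcal{X}=\{(s,s',e)\in\mathcal{S}\times\mathcal{S}\times\mathcal{E}: p_e(s'\mid s)>0\}$. Then the sequence $X_k=(S_k,S_{k+1},E_k)$ is a Markov chain on $\mathcal{X}$ whose transition probability from $x=(s_1,s_2,e)$ to $x'=(s_1',s_2',e')$ is $$z(x'\mid x)=\begin{cases}p_{e'}(s_2'\mid s_2)\,q(e'\mid e)&\text{if } s_2=s_1',\\ 0&\text{otherwise.}\end{cases}$$
   Context: The process has a finite state set $\mathcal{S}$, a finite set of environment states $\mathcal{E}$, for each $e\in\mathcal{E}$ a transition probability function $p_e(s'\mid s)$ on $\mathcal{S}$, and a Markov chain on $\mathcal{E}$ with transition probabilities $q(e'\mid e)$. It generates $(S_k,E_k)_{k\ge0}$ from an arbitrary initial distribution such that, given the entire past $(S_0,E_0,\dots,S_k,E_k)$, $S_{k+1}\sim p_{E_k}(\cdot\mid S_k)$ and $E_{k+1}\sim q(\cdot\mid E_k)$ independently. *)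

(* Defs.v *)
From HB Require Import structures.
From mathcomp Require Import all_boot all_order all_algebra.
From mathcomp Require Import all_classical all_reals all_analysis.
Set Implicit Arguments. Unset Strict Implicit. Unset Printing Implicit Defensive.
Import Order.TTheory GRing.Theory Num.Theory.
Local Open Scope classical_set_scope.
Local Open Scope ring_scope.

(* Environment-dependent kernel p e s s' = p_e(s' | s) is stochastic. *)
Definition stoch_family (S E : finType) (R : realType) (p : E -> S -> S -> R) :=
  (forall e s s', 0 <= p e s s') /\ (forall e s, \sum_(s' : S) p e s s' = 1).

Definition stoch (E : finType) (R : realType) (q : E -> E -> R) :=
  (forall e e', 0 <= q e e') /\ (forall e, \sum_(e' : E) q e e' = 1).

Definition hist (T S E : Type) (Sk : nat -> T -> S) (Ek : nat -> T -> E)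
  (n : nat) (ss : nat -> S) (es : nat -> E) : set T :=
  [set w | forall i, (i <= n)%N -> Sk i w = ss i /\ Ek i w = es i].

(* The pair process X_k = (S_k, S_{k+1}, E_k), encoded as ((s, s'), e). *)
Definition Xproc (T S E : Type) (Sk : nat -> T -> S) (Ek : nat -> T -> E)
  (k : nat) (w : T) : S * S * E := (Sk k w, Sk k.+1 w, Ek k w).

Definition inX (S E : finType) (R : realType) (p : E -> S -> S -> R)
  (x : S * S * E) : bool := 0 < p x.2 x.1.1 x.1.2.

Definition ztrans (S E : finType) (R : realType) (p : E -> S -> S -> R)
  (q : E -> E -> R) (x x' : S * S * E) : R :=
  if x.1.2 == x'.1.1 then p x'.2 x.1.2 x'.1.2 * q x.2 x'.2 else 0.

(* Main.v *)
Require Import Defs.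
From HB Require Import structures.
From mathcomp Require Import all_boot all_order all_algebra.
From mathcomp Require Import all_classical all_reals all_analysis.
Import Order.TTheory GRing.Theory Num.Theory.
Local Open Scope classical_set_scope.
Local Open Scope ring_scope.

Lemma bigU_mem (T : Type) (I : eqType) (r : seq I) (F : I -> set T) w :
  (\big[setU/set0]_(i <- r) F i) w <-> exists i, i \in r /\ F i w.
Proof.
elim: r => [|a r IH]; first by rewrite big_nil; split => [[]|[i []]].
rewrite big_cons; split.
- case=> [Fa|/IH [i [ir Fi]]]; first by exists a; rewrite inE eqxx.
  by exists i; rewrite inE ir orbT.
- case=> i [+ Fi]; rewrite inE => /orP [/eqP Ei|ir]; first by left; rewrite -Ei.
  by right; apply/IH; exists i.
Qed.

Lemma msum_seq (d : measure_display) (T : measurableType d) (R : realType)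
  (mu : {measure set T -> \bar R}) (I : eqType) (F : I -> set T) :
  (forall i, measurable (F i)) ->
  (forall i j, i != j -> F i `&` F j = set0) ->
  forall r, uniq r ->
  mu (\big[setU/set0]_(i <- r) F i) = (\sum_(i <- r) mu (F i))%E.
Proof.
move=> mF dF; elim=> [|a r IH]; first by rewrite !big_nil measure0.
rewrite /= => /andP [ar ur]; rewrite !big_cons measureU //.
- by congr (_ + _); apply: (IH ur).
- by apply: bigsetU_measurable => i _.
- apply/seteqP; split => // w [Fa /bigU_mem [i [ir Fi]]].
  have ai : a != i by apply: contraNneq ar => ->; done.
  by have := dF _ _ ai; move/seteqP => [+ _] => /(_ w (conj Fa Fi)).
Qed.

Lemma histS (T S E : Type) (Sk : nat -> T -> S) (Ek : nat -> T -> E) n ss es :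
  hist Sk Ek n.+1 ss es = hist Sk Ek n ss es `&`
     [set w | Sk n.+1 w = ss n.+1 /\ Ek n.+1 w = es n.+1].
Proof.
apply/seteqP; split => w /=.
- by move=> H; split; [move=> i ni; apply: H; apply: leqW|apply: H].
- move=> [H1 H2] i; rewrite leq_eqVlt => /orP [/eqP ->//|]; rewrite ltnS.
  exact: H1.
Qed.

Lemma hist_meas (d : measure_display) (T : measurableType d) (S E : Type)
  (Sk : nat -> T -> S) (Ek : nat -> T -> E) :
  (forall k s, measurable (Sk k @^-1` [set s])) ->
  (forall k e, measurable (Ek k @^-1` [set e])) ->
  forall n ss es, measurable (hist Sk Ek n ss es).
Proof.
move=> mS mE; elim=> [|n IH] ss es.
- have -> : hist Sk Ek 0 ss es = Sk 0 @^-1` [set ss 0] `&` Ek 0 @^-1` [set es 0].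
    apply/seteqP; split => w /=; first by move/(_ 0%N isT).
    by move=> [h1 h2] i; rewrite leqn0 => /eqP ->.
  exact: measurableI.
- rewrite histS; apply: measurableI => //.
  have -> : [set w | Sk n.+1 w = ss n.+1 /\ Ek n.+1 w = es n.+1] =
     Sk n.+1 @^-1` [set ss n.+1] `&` Ek n.+1 @^-1` [set es n.+1] by [].
  exact: measurableI.
Qed.

Lemma marg (R : realType) (d : measure_display) (T : measurableType d)
  (P : probability T R) (S E : finType)
  (p : E -> S -> S -> R) (q : E -> E -> R)
  (Sk : nat -> T -> S) (Ek : nat -> T -> E) :
  stoch_family p -> stoch q ->
  (forall k s, measurable (Sk k @^-1` [set s])) ->
  (forall k e, measurable (Ek k @^-1` [set e])) ->
  (forall n (ss : nat -> S) (es : nat -> E) (s' : S) (e' : E),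
     P (hist Sk Ek n ss es `&` [set w | Sk n.+1 w = s' /\ Ek n.+1 w = e'])
     = (P (hist Sk Ek n ss es) * (p (es n) (ss n) s' * q (es n) e')%:E)%E) ->
  forall n ss es s',
  P (hist Sk Ek n ss es `&` [set w | Sk n.+1 w = s'])
  = (P (hist Sk Ek n ss es) * (p (es n) (ss n) s')%:E)%E.
Proof.
move=> [p0 p1] [q0 q1] mS mE Hyp n ss es s'.
have -> : hist Sk Ek n ss es `&` [set w | Sk n.+1 w = s'] =
  \big[setU/set0]_(e' <- index_enum E)
     (hist Sk Ek n ss es `&` [set w | Sk n.+1 w = s' /\ Ek n.+1 w = e']).
  apply/seteqP; split => w.
  - move=> [h s]; apply/bigU_mem; exists (Ek n.+1 w); by split; rewrite ?mem_index_enum.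
  - by move/bigU_mem => [e' [_ [h [s _]]]].
rewrite msum_seq //; last first.
- exact: index_enum_uniq.
- move=> i j ij; apply/seteqP; split => // w [[_ [_ e1]] [_ [_ e2]]].
  by move/eqP: ij; apply; rewrite -e1 -e2.
- move=> e'; apply: measurableI; first exact: hist_meas.
  exact: (measurableI _ _ (mS _ _) (mE _ _)).
rewrite (eq_bigr (fun e0 => P (hist Sk Ek n ss es) * (p (es n) (ss n) s' * q (es n) e0)%:E)%E); last by move=> i _; apply: Hyp.
rewrite -ge0_sume_distrr; last by move=> i _; rewrite lee_fin mulr_ge0.
by rewrite sumEFin -big_distrr /= q1 mulr1.
Qed.

Lemma sum_triple (R : realType) (A B C : finType) (F : A * B * C -> R) :
  \sum_(x : A * B * C) F x = \sum_(a : A) \sum_(b : B) \sum_(c : C) F (a, b, c).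
Proof.
rewrite (eq_bigr (fun y => F (y.1, y.2))); last by case.
rewrite -(pair_big xpredT xpredT (fun y c => F (y, c))) /=.
rewrite (eq_bigr (fun y => \sum_(c : C) F (y.1, y.2, c))); last by case.
by rewrite -(pair_big xpredT xpredT (fun a b => \sum_(c : C) F (a, b, c))).
Qed.

Lemma part3 (R : realType) (S E : finType)
  (p : E -> S -> S -> R) (q : E -> E -> R) :
  stoch_family p -> stoch q ->
  forall x, \sum_(x' | inX p x') ztrans p q x x' = 1.
Proof.
move=> [p0 p1] [q0 q1] [[s1 s2] e].
rewrite big_mkcond /=.
rewrite (eq_bigr (fun x' => ztrans p q (s1, s2, e) x')); last first.
  move=> [[a b] c] _; case: ifP => // nX; rewrite /ztrans /=; case: ifP => // /eqP ea.
  have : p c a b == 0.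
    by rewrite eq_le p0 andbT leNgt; move: nX; rewrite /inX /= => ->.
  by rewrite ea => /eqP ->; rewrite mul0r.
rewrite sum_triple (bigD1 s2) //=.
have -> : \sum_(s1' | s1' != s2) \sum_(s2' : S) \sum_(e' : E)
    ztrans p q (s1, s2, e) (s1', s2', e') = 0.
  apply: big1 => s1' ne; apply: big1 => s2' _; apply: big1 => e' _.
  by rewrite /ztrans /= eq_sym (negbTE ne).
rewrite addr0.
rewrite /ztrans /= eqxx exchange_big /=.
rewrite (eq_bigr (fun e' => q e e')) ?q1 // => e' _.
by rewrite -big_distrl /= p1 mul1r.
Qed.

Definition ffS (S E : Type) k (f : {ffun 'I_k.+1 -> S * E}) (i : nat) : S :=
  (f (inord i)).1.
Definition ffE (S E : Type) k (f : {ffun 'I_k.+1 -> S * E}) (i : nat) : E :=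
  (f (inord i)).2.

Arguments ffS {S E k} f i.
Arguments ffE {S E k} f i.
Lemma part1 (R : realType) (d : measure_display) (T : measurableType d)
  (P : probability T R) (S E : finType)
  (p : E -> S -> S -> R) (q : E -> E -> R)
  (Sk : nat -> T -> S) (Ek : nat -> T -> E) :
  stoch_family p -> stoch q ->
  (forall k s, measurable (Sk k @^-1` [set s])) ->
  (forall k e, measurable (Ek k @^-1` [set e])) ->
  (forall n (ss : nat -> S) (es : nat -> E) (s' : S) (e' : E),
     P (hist Sk Ek n ss es `&` [set w | Sk n.+1 w = s' /\ Ek n.+1 w = e'])
     = (P (hist Sk Ek n ss es) * (p (es n) (ss n) s' * q (es n) e')%:E)%E) ->
  forall k, P [set w | ~~ inX p (Xproc Sk Ek k w)] = 0%E.
Proof.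
move=> hp hq mS mE Hyp k.
have p0 := hp.1.
pose G (f : {ffun 'I_k.+1 -> S * E}) s' : set T :=
  if 0 < p (ffE f k) (ffS f k) s' then set0
  else hist Sk Ek k (ffS f) (ffE f) `&` [set w | Sk k.+1 w = s'].
pose B := \big[setU/set0]_(f <- index_enum {ffun 'I_k.+1 -> S * E})
            \big[setU/set0]_(s' <- index_enum S) G f s'.
have KB : measurable B /\ P B = 0%E.
  apply: (big_ind (fun X => measurable X /\ P X = 0%E)).
  - by split => //; rewrite measure0.
  - move=> X Y [mX X0] [mY Y0]; split; first exact: measurableU.
    exact: null_set_setU.
  - move=> f _; apply: (big_ind (fun X => measurable X /\ P X = 0%E)).
    + by split => //; rewrite measure0.
    + move=> X Y [mX X0] [mY Y0]; split; first exact: measurableU.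
      exact: null_set_setU.
    + move=> s' _; rewrite /G; case: ifP => [_|npos].
        by split => //; rewrite measure0.
      split; first by apply: measurableI; [exact: hist_meas|exact: mS].
      rewrite (@marg R d T P S E p q Sk Ek hp hq mS mE Hyp).
      have -> : p (ffE f k) (ffS f k) s' = 0.
        by apply/eqP; rewrite eq_le p0 andbT leNgt npos.
      by rewrite mule0.
pose F (x : S * S * E) : set T :=
  if inX p x then set0 else [set w | Xproc Sk Ek k w = x].
have mbad : measurable [set w | ~~ inX p (Xproc Sk Ek k w)].
  have -> : [set w | ~~ inX p (Xproc Sk Ek k w)] =
     \big[setU/set0]_(x <- index_enum (S * S * E)%type) F x.
    apply/seteqP; split => w.
    - move=> /= nX; apply/bigU_mem; exists (Xproc Sk Ek k w).
      by rewrite mem_index_enum /F (negbTE nX).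
    - move/bigU_mem => [x [_]]; rewrite /F; case: ifP => // nX /= ->.
      by rewrite nX.
  apply: bigsetU_measurable => -[[s s'] e] _; rewrite /F; case: ifP => // _.
  have -> : [set w | Xproc Sk Ek k w = (s, s', e)] =
     Sk k @^-1` [set s] `&` Sk k.+1 @^-1` [set s'] `&` Ek k @^-1` [set e].
    apply/seteqP; split => w /=; rewrite /Xproc.
    - by case=> -> -> ->.
    - by move=> [[-> ->] ->].
  by apply: measurableI => //; apply: measurableI.
apply: (subset_measure0 mbad KB.1 _ KB.2).
move=> w /= nX; apply/bigU_mem.
exists [ffun i : 'I_k.+1 => (Sk i w, Ek i w)]; split; first by rewrite mem_index_enum.
apply/bigU_mem; exists (Sk k.+1 w); split; first by rewrite mem_index_enum.
have key : forall i, (i <= k)%N ->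
   ffS [ffun i : 'I_k.+1 => (Sk i w, Ek i w)] i = Sk i w /\
   ffE [ffun i : 'I_k.+1 => (Sk i w, Ek i w)] i = Ek i w.
  by move=> i ik; rewrite /ffS /ffE ffunE /= inordK.
rewrite /G; have [k1 k2] := key k (leqnn k); rewrite k1 k2.
have nX' : (0 < p (Ek k w) (Sk k w) (Sk k.+1 w)) = false := negbTE nX.
rewrite nX'; split => //= i ik; have [-> ->] := key i ik; done.
Qed.

Lemma part4 (R : realType) (d : measure_display) (T : measurableType d)
  (P : probability T R) (S E : finType)
  (p : E -> S -> S -> R) (q : E -> E -> R)
  (Sk : nat -> T -> S) (Ek : nat -> T -> E) :
  stoch_family p -> stoch q ->
  (forall k s, measurable (Sk k @^-1` [set s])) ->
  (forall k e, measurable (Ek k @^-1` [set e])) ->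
  (forall n (ss : nat -> S) (es : nat -> E) (s' : S) (e' : E),
     P (hist Sk Ek n ss es `&` [set w | Sk n.+1 w = s' /\ Ek n.+1 w = e'])
     = (P (hist Sk Ek n ss es) * (p (es n) (ss n) s' * q (es n) e')%:E)%E) ->
  forall n (xs : nat -> S * S * E),
     P [set w | forall i, (i <= n.+1)%N -> Xproc Sk Ek i w = xs i]
     = (P [set w | forall i, (i <= n)%N -> Xproc Sk Ek i w = xs i]
       * (ztrans p q (xs n) (xs n.+1))%:E)%E.
Proof.
move=> hp hq mS mE Hyp n xs.
pose a i := (xs i).1.1. pose b i := (xs i).1.2. pose c i := (xs i).2.
have xsE i : xs i = (a i, b i, c i) by rewrite /a /b /c; case: (xs i) => [[]].
have inEV m w : (forall i, (i <= m)%N -> Xproc Sk Ek i w = xs i) <->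
   (forall i, (i <= m)%N -> [/\ Sk i w = a i, Sk i.+1 w = b i & Ek i w = c i]).
  split => H i im; have := H i im; rewrite xsE /Xproc.
  - by case=> -> -> ->.
  - by case=> -> -> ->.
have cons m w : (forall i, (i <= m)%N -> Xproc Sk Ek i w = xs i) ->
    forall i, (i < m)%N -> b i = a i.+1.
  move/inEV => H i im; have [_ h1 _] := H i (ltnW im).
  by have [h2 _ _] := H i.+1 im; rewrite -h1 -h2.
have Eeq m : (forall i, (i < m)%N -> b i = a i.+1) ->
   [set w | forall i, (i <= m)%N -> Xproc Sk Ek i w = xs i] =
   hist Sk Ek m a c `&` [set w | Sk m.+1 w = b m].
  move=> cm; apply/seteqP; split => w /=.
  - move/inEV => H; split; last by have [] := H m (leqnn m).
    by move=> i im; have [? ? ?] := H i im.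
  - move=> [h hb]; apply/inEV => i im; have [h1 h2] := h i im; split => //.
    move: im; rewrite leq_eqVlt => /orP [/eqP ->//|im].
    by rewrite cm //; have [] := h i.+1 im.
have zt : ztrans p q (xs n) (xs n.+1) =
  if b n == a n.+1 then p (c n.+1) (b n) (b n.+1) * q (c n) (c n.+1) else 0
  by [].
case: (pselect (forall i, (i < n.+1)%N -> b i = a i.+1)) => [c1|nc1].
- have c0 : forall i, (i < n)%N -> b i = a i.+1 by move=> i i0; apply: c1; apply: leqW.
  rewrite (Eeq _ c1) (Eeq _ c0) (@marg R d T P S E p q Sk Ek hp hq mS mE Hyp).
  rewrite (c1 n (ltnSn n)) (@marg R d T P S E p q Sk Ek hp hq mS mE Hyp).
  rewrite histS Hyp zt (c1 n (ltnSn n)) eqxx.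
  by rewrite -!muleA -!EFinM mulrAC mulrA.
- have -> : [set w | forall i, (i <= n.+1)%N -> Xproc Sk Ek i w = xs i] = set0.
    by apply/seteqP; split => // w /= hw; apply: nc1; apply: cons hw.
  rewrite measure0.
  case: (pselect (forall i, (i < n)%N -> b i = a i.+1)) => [c0|nc0].
  + rewrite zt ifF ?mule0 //; apply/negbTE/eqP => bn; apply: nc1 => i.
    by rewrite ltnS leq_eqVlt => /orP [/eqP ->//|]; apply: c0.
  + have -> : [set w | forall i, (i <= n)%N -> Xproc Sk Ek i w = xs i] = set0.
      by apply/seteqP; split => // w /= hw; apply: nc0; apply: cons hw.
    by rewrite measure0 mul0e.
Qed.
Theorem lemma4 (R : realType) (d : measure_display) (T : measurableType d)
  (P : probability T R) (S E : finType)
  (p : E -> S -> S -> R) (q : E -> E -> R)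
  (Sk : nat -> T -> S) (Ek : nat -> T -> E) :
  stoch_family p -> stoch q ->
  (forall k s, measurable (Sk k @^-1` [set s])) ->
  (forall k e, measurable (Ek k @^-1` [set e])) ->
  (* given the past, S_{n+1} ~ p_{E_n}(.|S_n) and E_{n+1} ~ q(.|E_n) independently *)
  (forall n (ss : nat -> S) (es : nat -> E) (s' : S) (e' : E),
     P (hist Sk Ek n ss es `&` [set w | Sk n.+1 w = s' /\ Ek n.+1 w = e'])
     = (P (hist Sk Ek n ss es) * (p (es n) (ss n) s' * q (es n) e')%:E)%E) ->
  (* X_k takes values in the state space almost surely *)
  (forall k, P [set w | ~~ inX p (Xproc Sk Ek k w)] = 0%E) /\
  (* z is a transition probability on the state space *)
  (forall x x', inX p x -> inX p x' -> 0 <= ztrans p q x x') /\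
  (forall x, inX p x -> \sum_(x' | inX p x') ztrans p q x x' = 1) /\
  (* Markov property of (X_k) with transition z *)
  (forall n (xs : nat -> S * S * E), (forall i, (i <= n.+1)%N -> inX p (xs i)) ->
     P [set w | forall i, (i <= n.+1)%N -> Xproc Sk Ek i w = xs i]
     = (P [set w | forall i, (i <= n)%N -> Xproc Sk Ek i w = xs i]
       * (ztrans p q (xs n) (xs n.+1))%:E)%E).
Proof.
move=> hp hq mS mE Hyp.
split; first exact: (@part1 R d T P S E p q Sk Ek hp hq mS mE Hyp).
split.
  move=> x x' _ _; rewrite /ztrans; case: ifP => // _.
  by apply: mulr_ge0; [exact: hp.1 | exact: hq.1].
split; first by move=> x _; exact: part3.
by move=> n xs _; exact: (@part4 R d T P S E p q Sk Ek hp hq mS mE Hyp).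
Qed.
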